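(* Let $\epsilon\in(0,1/e]$ and $\eta=\epsilon/\ln(1/\epsilon)$. Let $D$ be a regular distribution with revenue curve $R(q)=q\,v^D(q)$, let $q\in(0,1)$ and $0<\Delta\le q(1-q)\eta$. If $\tilde v$ is any value with $v^D(q+\Delta/2)\le\tilde v\le v^D(q-\Delta/2)$ (in particular, a targeted sample of $D$ from the quantile interval $[q-\Delta/2,q+\Delta/2]$), then the estimate $\tilde R(q)=q\,\tilde v$ satisfies $$\frac{|\tilde R(q)-R(q)|}{R(q)}\le\eta.$$
   Context: Quantile $q^D(v)=\Pr_{x\sim D}[x\ge v]$; value at quantile $v^D(q)=\sup\{v\ge0:q^D(v)\ge q\}$, nonincreasing in $q$. $D$ is regular: it has a density and its revenue curve $R(q)=q\,v^D(q)$ is concave on $(0,1]$ (with $R\ge0$). A targeted sample from $[a,b]$ is $v^D(u)$ with $u$ uniform on $[a,b]$. *)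

(* Defs.v *)
From HB Require Import structures.
From mathcomp Require Import all_boot all_order all_algebra.
From mathcomp Require Import all_classical all_reals all_analysis.
Set Implicit Arguments. Unset Strict Implicit. Unset Printing Implicit Defensive.
Import Order.TTheory GRing.Theory Num.Theory.
Local Open Scope classical_set_scope.
Local Open Scope ring_scope.

Definition quantile (R : realType) (D : probability R R) (v : R) : R :=
  fine (D `[v, +oo[%classic).

Definition value_at (R : realType) (D : probability R R) (q : R) : R :=
  sup [set v : R | 0 <= v /\ q <= quantile D v].

Definition revenue (R : realType) (D : probability R R) (q : R) : R :=
  q * value_at D q.

Definition has_density (R : realType) (D : probability R R) : Prop :=
  exists f : R -> R, measurable_fun setT f /\ (forall x, 0 <= f x) /\
    forall A : set R, measurable A ->
      D A = (\int[lebesgue_measure]_(x in A) (f x)%:E)%E.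

Definition concave_on_01 (R : realType) (g : R -> R) : Prop :=
  forall x y t : R, 0 < x <= 1 -> 0 < y <= 1 -> 0 <= t <= 1 ->
    t * g x + (1 - t) * g y <= g (t * x + (1 - t) * y).

Definition regular (R : realType) (D : probability R R) : Prop :=
  has_density D /\ concave_on_01 (revenue D) /\
  (forall q : R, 0 < q <= 1 -> 0 <= revenue D q).

(* Main.v *)
Require Import Defs.
From HB Require Import structures.
From mathcomp Require Import all_boot all_order all_algebra.
From mathcomp Require Import all_classical all_reals all_analysis.
From mathcomp Require Import ring lra.
Import Order.TTheory GRing.Theory Num.Theory.
Local Open Scope ring_scope.

Lemma key (R : realType) (Rv : R -> R) (q D h vt : R) :
  concave_on_01 Rv -> (forall x, 0 < x <= 1 -> 0 <= Rv x) ->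
  0 < q < 1 -> 0 < D -> D <= q * (1 - q) * h -> 0 <= h <= 1 ->
  Rv (q + D/2) / (q + D/2) <= vt -> vt <= Rv (q - D/2) / (q - D/2) ->
  `| q * vt - Rv q | / Rv q <= h.
Proof.
move=> Hc Hn /andP[q0 q1] D0 HD /andP[h0 h1] Hlo Hup.
set a := q - D/2. set b := q + D/2.
have aE : a = q - D/2 by []. have bE : b = q + D/2 by [].
have qq : 0 < q * (1 - q) by apply: mulr_gt0; lra.
have Dq : D <= q * (1 - q) by have := ler_wpM2l (ltW qq) h1; lra.
have Dle1 : D <= q /\ D <= 1 - q by split; nra.
have a0 : 0 < a by rewrite /a; lra.
have a1 : a < 1 by rewrite /a; lra.
have b0 : 0 < b by rewrite /b; lra.
have b1 : b < 1 by rewrite /b; lra.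
have Ha : a * vt <= Rv a by rewrite mulrC -ler_pdivlMr.
have Hb : Rv b <= b * vt by rewrite mulrC -ler_pdivrMr.
have R1 : 0 <= Rv 1 by apply: Hn; lra.
have Rq : 0 <= Rv q by apply: Hn; lra.
have A : Rv a * (1 - q) <= Rv q * (1 - a).
  set t := (1 - q) / (1 - a).
  have t01 : 0 <= t <= 1.
    apply/andP; split; first by apply: divr_ge0; lra.
    rewrite /t ler_pdivrMr; lra.
  have := Hc a 1 t ltac:(lra) ltac:(lra) t01.
  have -> : t * a + (1 - t) * 1 = q by rewrite /t; field; lra.
  have Ht : t * (1 - a) = 1 - q by rewrite /t; field; lra.
  move=> H.
  have H2 : t * Rv a <= Rv q by nra.
  have := ler_wpM2r (ltW (_ : 0 < 1 - a)) H2; rewrite -/(1 - a).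
  move=> /(_ ltac:(lra)). nra.
have B : Rv q * (1 - b) <= Rv b * (1 - q).
  set t := (1 - b) / (1 - q).
  have t01 : 0 <= t <= 1.
    apply/andP; split; first by apply: divr_ge0; lra.
    rewrite /t ler_pdivrMr; lra.
  have := Hc q 1 t ltac:(lra) ltac:(lra) t01.
  have -> : t * q + (1 - t) * 1 = b by rewrite /t; field; lra.
  have Ht : t * (1 - q) = 1 - b by rewrite /t; field; lra.
  move=> H.
  have H2 : t * Rv q <= Rv b by nra.
  have := ler_wpM2r (ltW (_ : 0 < 1 - q)) H2.
  move=> /(_ ltac:(lra)). nra.
have [->|Rpos] := eqVneq (Rv q) 0; first by rewrite invr0 mulr0.
have Rp : 0 < Rv q by rewrite lt_def Rpos Rq.
rewrite ler_pdivrMr // ler_norml; apply/andP; split.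
-
  (* b*vt >= Rv b >= Rv q (1-b)/(1-q) ; need q*(1-b) >= (1-h) b (1-q) *)
  have E : (1 - h) * b * (1 - q) <= q * (1 - b).
    rewrite /b; nra.
  have F : (1 - h) * Rv q * b * (1 - q) <= b * (1 - q) * (q * vt).
    nra.
  have G : 0 < b * (1 - q) by apply: mulr_gt0; lra.
  nra.
- have E : q * (1 - a) <= (1 + h) * a * (1 - q).
    rewrite /a; nra.
  have F : b * (1 - q) * 0 <= 0 by lra.
  have G : 0 < a * (1 - q) by apply: mulr_gt0; lra.
  have F2 : a * (1 - q) * (q * vt) <= (1 + h) * Rv q * a * (1 - q).
    nra.
  nra.
Qed.

Theorem mainTheorem12 (R : realType) (eps : R) (D : probability R R)
  (q Delta vt : R) :
  0 < eps -> eps <= (expR 1)^-1 ->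
  regular D ->
  0 < q < 1 ->
  0 < Delta -> Delta <= q * (1 - q) * (eps / ln (1 / eps)) ->
  value_at D (q + Delta / 2) <= vt -> vt <= value_at D (q - Delta / 2) ->
  `| q * vt - revenue D q | / revenue D q <= eps / ln (1 / eps).
Proof.
move=> e0 e1 [_ [Hc Hn]] Hq D0 HD Hlo Hup.
have Hl : 1 <= ln (1 / eps).
  rewrite -[leLHS](expRK 1) ler_ln ?posrE ?expR_gt0 ?divr_gt0 //.
  rewrite -[expR 1]invrK div1r lef_pV2 ?posrE ?invr_gt0 ?expR_gt0 //.
have h0 : 0 <= eps / ln (1 / eps) by apply: divr_ge0; lra.
have h1 : eps / ln (1 / eps) <= 1.
  rewrite ler_pdivrMr; last lra.
  have : (expR 1)^-1 <= 1 :> R by rewrite invf_le1 ?expR_gt0 //; have := @expR_ge1Dx R 1; lra.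
  lra.
case/andP: (Hq) => q0 q1.
have Dq : Delta <= q * (1 - q).
  have qq : 0 < q * (1 - q) by apply: mulr_gt0; lra.
  have := ler_wpM2l (ltW qq) h1; lra.
have Hlo' : revenue D (q + Delta / 2) / (q + Delta / 2) <= vt.
  by rewrite /revenue [_ * value_at _ _]mulrC mulfK //; apply: lt0r_neq0; nra.
have Hup' : vt <= revenue D (q - Delta / 2) / (q - Delta / 2).
  rewrite /revenue [_ * value_at _ _]mulrC mulfK //; apply: lt0r_neq0.
  have : Delta <= q by nra. lra.
have h01 : 0 <= eps / ln (1 / eps) <= 1 by apply/andP.
exact: (key _ _ _ _ _ _ Hc Hn Hq D0 HD h01 Hlo' Hup').
Qed.
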